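(* Let $H$ be a real Hilbert space, let $D\subseteq H$ be a nonempty closed convex set, and let $T_1,\dots,T_m:D\to D$ be firmly nonexpansive operators with $F:=\bigcap_{i=1}^m\mathrm{Fix}(T_i)\neq\emptyset$. Fix $(\Omega,w)\in\mathcal{M}$, let $(\lambda_k)_{k\in\mathbb{N}}$ be a steering sequence, and let $u,x^0\in D$. Then the sequence defined by $$x^{k+1}=\lambda_k u+(1-\lambda_k)\sum_{t\in\Omega}w(t)T[t](x^k),\quad k\ge 0,$$ converges strongly to $P_F(u)$.
   Context: An operator $T:D\to H$ is firmly nonexpansive if $\|T(x)-T(y)\|^2\le\langle x-y,T(x)-T(y)\rangle$ for all $x,y\in D$. $\mathrm{Fix}(T)=\{x\in D: T(x)=x\}$; $P_F$ is the metric (nearest point) projection onto the closed convex set $F$. An index vector is a finite tuple $t=(t_1,\dots,t_q)$ with each $t_\ell\in\{1,\dots,m\}$; the string operator is $T[t]:=T_{t_q}T_{t_{q-1}}\cdots T_{t_1}$. A finite set $\Omega$ of index vectors is fit if every $i\in\{1,\dots,m\}$ appears as a component of some $t\in\Omega$. $\mathcal{M}$ denotes the collection of all pairs $(\Omega,w)$ where $\Omega$ is a fit finite set of index vectors and $w:\Omega\to(0,1]$ satisfies $\sum_{t\in\Omega}w(t)=1$. A steering sequence is a real sequence $(\lambda_k)_{k\in\mathbb{N}}$ with $\lambda_k\in[0,1]$ for all $k$, $\lim_{k\to\infty}\lambda_k=0$, $\sum_{k=0}^\infty\lambda_k=+\infty$, and $\sum_{k=0}^\infty|\lambda_{k+1}-\lambda_k|<\infty$.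 $\mathbb{N}$ includes $0$. *)

(* Defs.v *)
From HB Require Import structures.
From mathcomp Require Import all_boot all_order all_algebra.
From mathcomp Require Import all_classical all_reals all_analysis.
Set Implicit Arguments. Unset Strict Implicit. Unset Printing Implicit Defensive.
Import Order.TTheory GRing.Theory Num.Theory.
Import numFieldNormedType.Exports.
Local Open Scope classical_set_scope.
Local Open Scope ring_scope.

(* [inner] is a real inner product on V inducing the norm of V. Together with
   completeness of V (completeNormedModType) this makes V a real Hilbert space. *)
Definition is_inner_product (R : realType) (V : normedModType R)
  (inner : V -> V -> R) : Prop :=
  [/\ (forall x y, inner x y = inner y x),
      (forall (a : R) x y z, inner (a *: x + y) z = a * inner x z + inner y z)
    & (forall x, inner x x = `|x| ^+ 2)].

Definition convex_subset (R : realType) (V : normedModType R) (D : set V) : Prop :=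
  forall x y (t : R), D x -> D y -> 0 <= t <= 1 -> D (t *: x + (1 - t) *: y).

Definition firmly_nonexpansive (R : realType) (V : normedModType R)
  (inner : V -> V -> R) (D : set V) (T : V -> V) : Prop :=
  forall x y, D x -> D y -> `|T x - T y| ^+ 2 <= inner (x - y) (T x - T y).

Definition Fix (V : Type) (D : set V) (T : V -> V) : set V :=
  [set x | D x /\ T x = x].

Definition metric_proj (R : realType) (V : normedModType R)
  (F : set V) (u p : V) : Prop :=
  F p /\ forall y, F y -> `|u - p| <= `|u - y|.

(* string operator T[t] = T_{t_q} \o ... \o T_{t_1}, t = [:: t_1; ...; t_q] *)
Definition string_op (V : Type) (m : nat) (T : 'I_m -> V -> V)
  (t : seq 'I_m) (x : V) : V :=
  foldl (fun y i => T i y) x t.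

(* (Omega, w) in M: Omega a finite (duplicate-free) set of nonempty index
   vectors, fit, and w : Omega -> (0,1] summing to 1 *)
Definition in_M (R : realType) (m : nat) (Omega : seq (seq 'I_m))
  (w : seq 'I_m -> R) : Prop :=
  [/\ uniq Omega,
      (forall t, t \in Omega -> t != [::]),
      (forall i : 'I_m, exists2 t, t \in Omega & i \in t),
      (forall t, t \in Omega -> 0 < w t <= 1)
    & \sum_(t <- Omega) w t = 1].

Definition steering (R : realType) (lam : nat -> R) : Prop :=
  [/\ (forall k, 0 <= lam k <= 1),
      lam @ \oo --> (0 : R),
      series lam @ \oo --> +oo
    & cvg (series (fun k => `|lam k.+1 - lam k|) @ \oo)].

(* Main.v *)
Require Import Defs.
From HB Require Import structures.
From mathcomp Require Import all_boot all_order all_algebra.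
From mathcomp Require Import all_classical all_reals all_analysis.
From mathcomp Require Import ring lra.
Set Implicit Arguments. Unset Strict Implicit. Unset Printing Implicit Defensive.
Import Order.TTheory GRing.Theory Num.Theory.
Import numFieldNormedType.Exports.
Local Open Scope classical_set_scope.
Local Open Scope ring_scope.
Section Inner.
Variables (R : realType) (V : normedModType R) (inner : V -> V -> R).
Hypothesis Hip : is_inner_product inner.
Local Notation "<< x , y >>" := (inner x y).

Lemma ipC x y : <<x, y>> = <<y, x>>.
Proof. by case: Hip. Qed.
Lemma ipLin a x y z : <<a *: x + y, z>> = a * <<x, z>> + <<y, z>>.
Proof. by case: Hip. Qed.
Lemma ipnn x : <<x, x>> = `|x| ^+ 2.
Proof. by case: Hip. Qed.
Lemma ip0l z : <<0, z>> = 0.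
Proof.
have := ipLin 1 0 0 z; rewrite scaler0 addr0 mul1r => h; lra.
Qed.
Lemma ip0r z : <<z, 0>> = 0.
Proof. by rewrite ipC ip0l. Qed.
Lemma ipDl x y z : <<x + y, z>> = <<x, z>> + <<y, z>>.
Proof. by have := ipLin 1 x y z; rewrite scale1r mul1r. Qed.
Lemma ipZl a x z : <<a *: x, z>> = a * <<x, z>>.
Proof. by have := ipLin a x 0 z; rewrite addr0 ip0l addr0. Qed.
Lemma ipNl x z : <<- x, z>> = - <<x, z>>.
Proof. by rewrite -scaleN1r ipZl mulN1r. Qed.
Lemma ipBl x y z : <<x - y, z>> = <<x, z>> - <<y, z>>.
Proof. by rewrite ipDl ipNl. Qed.
Lemma ipDr x y z : <<z, x + y>> = <<z, x>> + <<z, y>>.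
Proof. by rewrite ipC ipDl !(ipC z). Qed.
Lemma ipZr a x z : <<z, a *: x>> = a * <<z, x>>.
Proof. by rewrite ipC ipZl ipC. Qed.
Lemma ipNr x z : <<z, - x>> = - <<z, x>>.
Proof. by rewrite ipC ipNl ipC. Qed.
Lemma ipBr x y z : <<z, x - y>> = <<z, x>> - <<z, y>>.
Proof. by rewrite ipDr ipNr. Qed.

Lemma sqrnD x y : `|x + y| ^+ 2 = `|x| ^+ 2 + 2 * <<x, y>> + `|y| ^+ 2.
Proof.
rewrite -!ipnn ipDl !ipDr (ipC y x); ring.
Qed.
Lemma sqrnB x y : `|x - y| ^+ 2 = `|x| ^+ 2 - 2 * <<x, y>> + `|y| ^+ 2.
Proof. by rewrite sqrnD ipNr normrN; ring. Qed.

Lemma ip_sum (I : Type) (s : seq I) (f : I -> V) z :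
  <<\sum_(i <- s) f i, z>> = \sum_(i <- s) <<f i, z>>.
Proof.
elim: s => [|i s IH]; first by rewrite !big_nil ip0l.
by rewrite !big_cons ipDl IH.
Qed.

Lemma CS x y : <<x, y>> <= `|x| * `|y|.
Proof.
have [x0|xn0] := eqVneq x 0; first by rewrite x0 ip0l normr0 mul0r.
have [y0|yn0] := eqVneq y 0; first by rewrite y0 ip0r normr0 mulr0.
have h := sqr_ge0 (`| (`|y| *: x - `|x| *: y) |).
rewrite sqrnB !normrZ ipZl ipZr !normr_id in h.
have hx : 0 < `|x| by rewrite normr_gt0.
have hy : 0 < `|y| by rewrite normr_gt0.
have hP : 0 < `|x| * `|y| by rewrite mulr_gt0.
rewrite -subr_ge0; rewrite -(pmulr_rge0 _ hP); nra.
Qed.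

Lemma CSabs x y : `|<<x, y>>| <= `|x| * `|y|.
Proof.
rewrite ler_norml CS andbT; have := CS (- x) y; rewrite ipNl normrN; lra.
Qed.
Lemma jensen (I : eqType) (s : seq I) (wt : I -> R) (a : I -> V) :
  (forall i, i \in s -> 0 <= wt i) -> \sum_(i <- s) wt i = 1 ->
  `|\sum_(i <- s) wt i *: a i| ^+ 2 <= \sum_(i <- s) wt i * `|a i| ^+ 2.
Proof.
move=> w0 w1; set m := \sum_(i <- s) wt i *: a i.
have h : 0 <= \sum_(i <- s) wt i * `|a i - m| ^+ 2.
  by rewrite big_seq; apply: sumr_ge0 => i /w0 ?; rewrite mulr_ge0 ?sqr_ge0.
have E i : wt i * `|a i - m| ^+ 2 =
    wt i * `|a i| ^+ 2 - 2 * <<wt i *: a i, m>> + wt i * `|m| ^+ 2.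
  by rewrite sqrnB ipZl; ring.
rewrite (eq_bigr _ (fun i _ => E i)) big_split sumrB /= in h.
rewrite -mulr_sumr -ip_sum -mulr_suml w1 ipnn in h; lra.
Qed.
End Inner.

Lemma sum_nonneg_le0 (R : realType) (I : eqType) (s : seq I) (F : I -> R) :
  (forall i, i \in s -> 0 <= F i) -> \sum_(i <- s) F i <= 0 ->
  forall i, i \in s -> F i <= 0.
Proof.
elim: s => [|a s IH] //= Hp; rewrite big_cons => Hs i.
have Ha := Hp a (mem_head _ _).
have Hs0 : 0 <= \sum_(j <- s) F j.
  by rewrite big_seq; apply: sumr_ge0 => j js; apply: Hp; rewrite inE js orbT.
rewrite inE => /orP[/eqP->|ins]; first lra.
apply: IH => //; last lra.
by move=> j js; apply: Hp; rewrite inE js orbT.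
Qed.

Lemma convex_comb (R : realType) (V : normedModType R) (D : set V) (A : eqType)
  (s : seq A) (wt : A -> R) (y : A -> V) :
  convex_subset D -> (forall a, a \in s -> 0 < wt a) ->
  (forall a, a \in s -> D (y a)) -> s <> [::] ->
  0 < \sum_(a <- s) wt a /\
  D ((\sum_(a <- s) wt a)^-1 *: \sum_(a <- s) wt a *: y a).
Proof.
move=> cD; elim: s => [|a s IH] //= Hw Hy _.
rewrite !big_cons.
have wa := Hw a (mem_head a s).
case: s IH Hw Hy => [|b s] IH Hw Hy.
  rewrite !big_nil !addr0 scalerA mulVf ?gt_eqF //= scale1r; split => //.
  by apply: Hy; rewrite mem_head.
have [W0 DSv] := IH (fun c hc => Hw c (@mem_behead _ (a :: b :: s) _ hc)) (fun c hc => Hy c (@mem_behead _ (a :: b :: s) _ hc)) ltac:(by []).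
move: W0 DSv; set W := \sum_(_ <- _) _; set Sv := \sum_(_ <- _) _ => W0 DSv.
split; first lra.
have Wt : 0 < wt a + W by lra.
have := cD (y a) (W^-1 *: Sv) (wt a / (wt a + W)) (Hy a (mem_head _ _)) DSv.
have -> : 1 - wt a / (wt a + W) = W / (wt a + W).
  by field; lra.
have e : W / (wt a + W) * W^-1 = (wt a + W)^-1 by field; lra.
rewrite scalerA e => h.
rewrite scalerDr scalerA [_^-1 * wt a]mulrC; apply: h.
by rewrite divr_ge0 ?ler_pdivrMr /=; lra.
Qed.

Section Ops.
Variables (R : realType) (V : normedModType R) (inner : V -> V -> R) (D : set V)
  (m : nat) (T : 'I_m -> V -> V).
Hypothesis Hip : is_inner_product inner.
Hypothesis DT : forall i y, D y -> D (T i y).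
Hypothesis FN : forall i, firmly_nonexpansive inner D (T i).
Local Notation "<< x , y >>" := (inner x y).

Lemma fne_ne i x y : D x -> D y -> `|T i x - T i y| <= `|x - y|.
Proof.
move=> Dx Dy; have h := FN i Dx Dy.
have := CS Hip (x - y) (T i x - T i y).
have := normr_ge0 (T i x - T i y); have := normr_ge0 (x - y).
nra.
Qed.

Lemma string_cons i t x : string_op T (i :: t) x = string_op T t (T i x).
Proof. by []. Qed.

Lemma string_D t x : D x -> D (string_op T t x).
Proof.
elim: t x => [|i t IH] x Dx //; rewrite string_cons; apply: IH; exact: DT.
Qed.

Lemma string_ne t x y : D x -> D y ->
  `|string_op T t x - string_op T t y| <= `|x - y|.
Proof.
elim: t x y => [|i t IH] x y Dx Dy //; rewrite !string_cons.
apply: le_trans (IH _ _ (DT i Dx) (DT i Dy)) _; exact: fne_ne.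
Qed.

Lemma fne_fix i x p : D x -> D p -> T i p = p ->
  `|T i x - p| ^+ 2 + `|x - T i x| ^+ 2 <= `|x - p| ^+ 2.
Proof.
move=> Dx Dp Tp; have h := FN i Dx Dp; rewrite Tp in h.
have -> : x - T i x = (x - p) - (T i x - p) by rewrite opprB addrA subrK.
rewrite (sqrnB Hip (x - p)); lra.
Qed.

Lemma string_fix p t x : D x -> D p -> (forall i, T i p = p) ->
  `|string_op T t x - p| ^+ 2 <= `|x - p| ^+ 2 /\
  (`|x - p| ^+ 2 <= `|string_op T t x - p| ^+ 2 -> forall i, i \in t -> T i x = x).
Proof.
move=> + Dp Tp; elim: t x => [|i t IH] x Dx //; rewrite string_cons.
have h := fne_fix Dx Dp (Tp i).
have [h1 h2] := IH (T i x) (DT i Dx).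
have h3 := sqr_ge0 `|x - T i x|.
split; first lra.
move=> h4.
have e : `|x - T i x| ^+ 2 = 0 by lra.
have eTx : T i x = x.
  by apply/eqP; rewrite eq_sym -subr_eq0 -normr_eq0 -sqrf_eq0 e.
move=> j; rewrite inE => /orP[/eqP->//|jt].
by rewrite eTx in h2 h4; apply: h2 => //; lra.
Qed.
End Ops.

Section SOp.
Variables (R : realType) (V : normedModType R) (inner : V -> V -> R) (D : set V)
  (m : nat) (T : 'I_m -> V -> V) (Omega : seq (seq 'I_m)) (w : seq 'I_m -> R).
Hypothesis Hip : is_inner_product inner.
Hypothesis cD : convex_subset D.
Hypothesis DT : forall i y, D y -> D (T i y).
Hypothesis FN : forall i, firmly_nonexpansive inner D (T i).
Hypothesis HM : in_M Omega w.

Definition Sop x := \sum_(t <- Omega) w t *: string_op T t x.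

Lemma w_pos t : t \in Omega -> 0 < w t.
Proof. by case: HM => _ _ _ h _ /h /andP[]. Qed.
Lemma w_sum : \sum_(t <- Omega) w t = 1.
Proof. by case: HM. Qed.
Lemma Omega_nil : Omega <> [::].
Proof. by move=> e; have := w_sum; rewrite e big_nil => /eqP; rewrite eq_sym oner_eq0. Qed.

Lemma Sop_D x : D x -> D (Sop x).
Proof.
move=> Dx; have [_] := @convex_comb R V D _ Omega w (fun t => string_op T t x) cD w_pos
  (fun t _ => string_D DT t Dx) Omega_nil.
by rewrite w_sum invr1 scale1r.
Qed.

Lemma Sop_ne x y : D x -> D y -> `|Sop x - Sop y| <= `|x - y|.
Proof.
move=> Dx Dy; rewrite /Sop -sumrB.
apply: le_trans (ler_norm_sum _ _ _) _.
rewrite -[leRHS]mul1r -w_sum mulr_suml big_seq [leRHS]big_seq.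
apply: ler_sum => t tO; rewrite -scalerBr normrZ gtr0_norm ?w_pos //.
by rewrite ler_pM2l ?w_pos // (string_ne Hip DT FN).
Qed.

Lemma string_fixp p t : (forall i, T i p = p) -> string_op T t p = p.
Proof. by move=> Tp; elim: t p Tp => [|i t IH] p Tp //; rewrite string_cons Tp IH. Qed.

Lemma Sop_fix p : (forall i, T i p = p) -> Sop p = p.
Proof.
move=> Tp; rewrite /Sop (eq_bigr (fun t => w t *: p)) => [|t _]; last by rewrite string_fixp.
by rewrite -scaler_suml w_sum scale1r.
Qed.

Lemma Sop_fixF z p : D z -> Sop z = z -> D p -> (forall i, T i p = p) ->
  forall i, T i z = z.
Proof.
move=> Dz Sz Dp Tp i.
have hJ := jensen Hip (fun t => string_op T t z - p)
  (fun t tO => ltW (w_pos tO)) w_sum.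
have em : \sum_(t <- Omega) w t *: (string_op T t z - p) = z - p.
  rewrite (eq_bigr (fun t => w t *: string_op T t z - w t *: p)) => [|t _];
    last by rewrite scalerBr.
  by rewrite sumrB -scaler_suml w_sum scale1r; congr (_ - _); exact: Sz.
rewrite em in hJ.
have hle : \sum_(t <- Omega) w t * (`|z - p| ^+ 2 - `|string_op T t z - p| ^+ 2) <= 0.
  rewrite (eq_bigr (fun t => w t * `|z - p| ^+ 2 - w t * `|string_op T t z - p| ^+ 2));
    last by move=> t _; ring.
  rewrite sumrB -mulr_suml w_sum mul1r; lra.
case: HM => _ _ fit _ _.
have [t tO it] := fit i.
have h0 := sum_nonneg_le0 (F := fun t => w t * (`|z - p| ^+ 2 - `|string_op T t z - p| ^+ 2)) _ hle tO.
have [h1 h2] := string_fix Hip DT FN t Dz Dp Tp.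
apply: h2 it.
have wt0 := w_pos tO.
suff : 0 <= w t * (`|string_op T t z - p| ^+ 2 - `|z - p| ^+ 2) by rewrite pmulr_rge0 // subr_ge0.
rewrite -opprB mulrN oppr_ge0; apply: h0 => u uO.
have [h3 _] := string_fix Hip DT FN u Dz Dp Tp.
by rewrite mulr_ge0 ?subr_ge0 // ltW // w_pos.
Qed.

End SOp.
Lemma nearNP (P : nat -> Prop) :
  (\forall n \near \oo, P n) <-> exists N, forall n, (N <= n)%N -> P n.
Proof.
split.
  by case=> N _ HN; exists N => n Nn; apply: HN.
by case=> N HN; exists N => // n /= Nn; apply: HN.
Qed.

Lemma cvg_epsN (R : realType) (V : normedModType R) (f : nat -> V) (y : V) :
  f @ \oo --> y <-> forall e, 0 < e -> exists N, forall n, (N <= n)%N -> `|y - f n| < e.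
Proof.
rewrite cvgrPdist_lt; split => H e e0; apply/nearNP; exact: H.
Qed.

Lemma cauchy_cvg_seq (R : realType) (V : completeNormedModType R) (f : nat -> V) :
  (forall e, 0 < e -> exists N, forall n m, (N <= n)%N -> (N <= m)%N -> `|f n - f m| < e) ->
  cvgn f.
Proof.
move=> H; apply/cauchy_cvgP; apply/cauchyP => e e0.
have [N HN] := H e e0; exists (f N); apply/nearNP; exists N => n Nn.
by rewrite -ball_normE /=; apply: HN.
Qed.

Lemma banach' (R : realType) (X : completeNormedModType R) (U : set X) (f : X -> X) (q : R) :
  closed U -> U !=set0 -> (forall x, U x -> U (f x)) -> 0 <= q < 1 ->
  (forall x y, U x -> U y -> `|f x - f y| <= q * `|x - y|) ->
  exists2 p, U p & p = f p.
Proof.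
move=> cU [b Ub] fU /andP[q0 q1] lip.
pose g : {fun U >-> U} := HB.pack f (isFun.Build _ _ U U f fU).
apply: (@banach_fixed_point R X U g) => //; last by exists b.
exists (NngNum q0); split => //=.
by move=> [x y] [/= Ux Uy]; exact: lip.
Qed.

Lemma le0_eps (R : realType) (x : R) : (forall e, 0 < e -> x <= e) -> x <= 0.
Proof.
move=> h; rewrite leNgt; apply/negP => x0.
have := h (x / 2); rewrite divr_gt0 // => /(_ isT); lra.
Qed.
Lemma xu (R : realType) (a b c lam : nat -> R) :
 (forall k, 0 <= a k) -> (forall k, 0 <= lam k <= 1) -> (forall k, 0 <= c k) ->
 (forall k, a k.+1 <= (1 - lam k) * a k + lam k * b k + c k) ->
 (forall e, 0 < e -> exists N, forall k, (N <= k)%N -> b k <= e) ->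
 (forall e, 0 < e -> exists N, forall n k, (N <= n)%N -> \sum_(n <= j < k) c j <= e) ->
 (forall N M, exists K, forall k, (K <= k)%N -> M <= \sum_(N <= j < k) lam j) ->
 forall e, 0 < e -> exists N, forall k, (N <= k)%N -> a k <= e.
Proof.
move=> a0 l01 c0 rec hb hc hl e e0.
have e3 : 0 < e / 3 by rewrite divr_gt0.
have [N1 HN1] := hb _ e3.
have [N2 HN2] := hc _ e3.
pose N := maxn N1 N2.
have N1N : (N1 <= N)%N by rewrite leq_maxl.
have N2N : (N2 <= N)%N by rewrite leq_maxr.
pose C k := \sum_(N <= j < k) c j.
pose L k := \sum_(N <= j < k) lam j.
pose A k := a k - e / 3 - C k.
have L0 k : 0 <= L k by apply: sumr_ge0 => j _; case/andP: (l01 j).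
have C0 k : 0 <= C k by apply: sumr_ge0 => j _; exact: c0.
have claim i : A (N + i)%N * (1 + L (N + i)%N) <= a N.
  elim: i => [|i IH].
    rewrite addn0 /A /C /L !big_geq // subr0 addr0 mulr1; lra.
  rewrite addnS.
  have Nk : (N <= N + i)%N by rewrite leq_addr.
  have eC : C (N + i).+1 = C (N + i)%N + c (N + i)%N by rewrite /C big_nat_recr.
  have eL : L (N + i).+1 = L (N + i)%N + lam (N + i)%N by rewrite /L big_nat_recr.
  rewrite eL.
  have hr := rec (N + i)%N.
  have hbk := HN1 (N + i)%N (leq_trans N1N Nk).
  have [lk0 lk1] := andP (l01 (N + i)%N).
  have hA : A (N + i).+1 <= (1 - lam (N + i)%N) * A (N + i)%N.
    rewrite /A eC.
    have := C0 (N + i)%N.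
    have : lam (N + i)%N * b (N + i)%N <= lam (N + i)%N * (e / 3) by rewrite ler_wpM2l.
    nra.
  have hL := L0 (N + i)%N.
  have haN := a0 N.
  case: (lerP (A (N + i).+1) 0) => hA0.
    by apply: le_trans haN; rewrite mulr_le0_ge0 //; lra.
  have hAk : 0 < A (N + i)%N by nra.
  apply: le_trans IH.
  set x := A (N + i).+1 in hA hA0 *; set y := A (N + i)%N in hA hAk *.
  set l := lam (N + i)%N in hA lk0 lk1 *; set LL := L (N + i)%N in hL *.
  have h1 : x * (1 + (LL + l)) <= (1 - l) * y * (1 + (LL + l)) by rewrite ler_wpM2r //; lra.
  apply: le_trans h1 _.
  have h2 : (1 - l) * (1 + (LL + l)) <= 1 + LL by nra.
  have := ler_wpM2l (ltW hAk) h2; nra.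
have [K HK] := hl N (3 * a N / e).
exists (maxn K N) => k; rewrite geq_max => /andP[Kk Nk].
have := claim (k - N)%N; rewrite subnKC // => hk.
have hLk := HK k Kk.
have hCk : C k <= e / 3 by apply: HN2.
have hLk' : a N <= e / 3 * L k.
  have h := ler_wpM2r (ltW e0) hLk; rewrite divfK ?gt_eqF // in h; rewrite /L; lra.
have hAk : A k <= e / 3.
  have hL := L0 k.
  have : A k * (1 + L k) <= e / 3 * (1 + L k) by lra.
  by rewrite ler_pM2r //; lra.
rewrite /A in hAk; lra.
Qed.

Section Halpern.
Variables (R : realType) (V : completeNormedModType R) (inner : V -> V -> R)
  (D : set V) (S : V -> V) (u : V).
Hypothesis Hip : is_inner_product inner.
Hypothesis cD : convex_subset D.
Hypothesis clD : closed D.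
Hypothesis SD : forall x, D x -> D (S x).
Hypothesis Sne : forall x y, D x -> D y -> `|S x - S y| <= `|x - y|.
Hypothesis Du : D u.
Local Notation "<< x , y >>" := (inner x y).

Lemma ip_diff a b c d : `|<<a, b>> - <<c, d>>| <= `|a - c| * `|b| + `|c| * `|b - d|.
Proof.
have -> : <<a, b>> - <<c, d>> = <<a - c, b>> + <<c, b - d>>.
  by rewrite (ipBl Hip) (ipBr Hip); ring.
by apply: le_trans (ler_normD _ _) _; apply: lerD; apply: CSabs.
Qed.

Lemma mono x y : D x -> D y -> 0 <= << (x - S x) - (y - S y), x - y >>.
Proof.
move=> Dx Dy.
have -> : (x - S x) - (y - S y) = (x - y) - (S x - S y).
  by rewrite !opprB addrACA [RHS]addrACA [- y + _]addrC.
rewrite (ipBl Hip) (ipnn Hip); have := CS Hip (S x - S y) (x - y).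
have := ler_wpM2r (normr_ge0 (x - y)) (Sne Dx Dy); rewrite expr2; lra.
Qed.

Lemma browder_pt t : 0 < t < 1 -> exists2 z, D z & z = t *: u + (1 - t) *: S z.
Proof.
move=> /andP[t0 t1].
apply: (@banach' R V D (fun y => t *: u + (1 - t) *: S y) (1 - t)) => //.
- by exists u.
- move=> y Dy; apply: cD => //; first exact: SD.
  by rewrite (ltW t0) (ltW t1).
- by apply/andP; split; lra.
- move=> x y Dx Dy; rewrite opprD addrACA subrr add0r -scalerBr normrZ ger0_norm; last lra.
  by rewrite ler_wpM2l ?Sne //; lra.
Qed.

Lemma res_gen t z : 0 < t < 1 -> z = t *: u + (1 - t) *: S z ->
  z - S z = (t / (1 - t)) *: (u - z).
Proof.
move=> /andP[t0 t1] Hz.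
have h1 : (1 - t) *: S z = z - t *: u.
  by apply/eqP; rewrite eq_sym subr_eq [_ + t *: u]addrC -Hz.
have key : (1 - t) *: (z - S z) = t *: (u - z).
  rewrite scalerBr h1 scalerBl scale1r scalerBr.
  by rewrite opprB addrC addrA subrK.
have ne : 1 - t != 0 by rewrite subr_eq0 eq_sym lt_eqF.
by rewrite -[z - S z]scale1r -{1}(mulVf ne) -[LHS]scalerA key !scalerA mulrC.
Qed.

Definition tn (n : nat) : R := (n.+2%:R)^-1.
Definition an (n : nat) : R := (n.+1%:R)^-1.

Lemma tn01 n : 0 < tn n < 1.
Proof.
rewrite /tn invr_gt0 ltr0n /= invf_lt1 ?ltr0n // ltr1n //.
Qed.

Lemma an_gt0 n : 0 < an n.
Proof. by rewrite /an invr_gt0 ltr0n. Qed.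

Lemma tn_an n : tn n / (1 - tn n) = an n.
Proof.
rewrite /tn /an -!natr1.
have h : 0 < n%:R + 1 :> R by rewrite ltr_pwDr ?ler0n.
field; rewrite ?gt_eqF //; lra.
Qed.

Lemma an_lt n k : (n < k)%N -> an k < an n.
Proof.
move=> nk; rewrite /an ltf_pV2 ?posrE ?ltr0n // ltr_nat ltnS //.
Qed.

Lemma an_small (B e : R) : 0 <= B -> 0 < e -> exists N, forall n, (N <= n)%N -> an n * B <= e.
Proof.
move=> B0 e0; exists (Num.Def.archi_bound (B / e)) => n Nn.
have h := archi_boundP (divr_ge0 B0 (ltW e0)).
have h2 : (Num.Def.archi_bound (B / e))%:R <= n%:R :> R by rewrite ler_nat.
have h3 : B < e * n.+1%:R.
  rewrite -natr1; move: h; rewrite ltr_pdivrMr // => h; nra.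
rewrite /an mulrC ler_pdivrMr ?ltr0n //; lra.
Qed.

Section Path.
Variable p0 : V.
Hypothesis Dp0 : D p0.
Hypothesis Sp0 : S p0 = p0.
Variable zs : nat -> V.
Hypothesis Hzs : forall n, D (zs n) /\ zs n = tn n *: u + (1 - tn n) *: S (zs n).

Lemma zsD n : D (zs n). Proof. by case: (Hzs n). Qed.

Lemma zs_res n : zs n - S (zs n) = an n *: (u - zs n).
Proof. by rewrite -tn_an; apply: res_gen; [exact: tn01 | case: (Hzs n)]. Qed.

Lemma zs_L3 q n : D q -> S q = q -> 0 <= <<u - zs n, zs n - q>>.
Proof.
move=> Dq Sq; have := mono (zsD n) Dq.
by rewrite Sq subrr subr0 zs_res (ipZl Hip) pmulr_rge0 // an_gt0.
Qed.

Lemma zs_bnd q n : D q -> S q = q -> `|u - zs n| <= `|u - q|.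
Proof.
move=> Dq Sq; have h := zs_L3 n Dq Sq.
have e : u - q = (u - zs n) + (zs n - q) by rewrite addrA subrK.
have := CS Hip (u - zs n) (u - q).
rewrite {1}e (ipDr Hip) (ipnn Hip) => h2.
have := normr_ge0 (u - zs n); have := normr_ge0 (u - q); nra.
Qed.

Lemma zs_cauchy n k : (n <= k)%N ->
  `|zs n - zs k| ^+ 2 <= `|u - zs k| ^+ 2 - `|u - zs n| ^+ 2.
Proof.
rewrite leq_eqVlt => /orP[/eqP->|nk]; first by rewrite subrr normr0 expr2 mulr0 subrr.
have := mono (zsD n) (zsD k); rewrite !zs_res (ipBl Hip) !(ipZl Hip).
have e : u - zs k = (u - zs n) + (zs n - zs k) by rewrite addrA subrK.
rewrite e (ipDl Hip (u - zs n)) (ipnn Hip (zs n - zs k)) (sqrnD Hip (u - zs n)).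
have := an_lt nk; have := an_gt0 k; have := sqr_ge0 `|zs n - zs k|.
nra.
Qed.

Lemma zs_cvg : cvgn zs.
Proof.
pose s n := `|u - zs n| ^+ 2.
have snd : nondecreasing_seq s.
  move=> n k nk; have := zs_cauchy nk; have := sqr_ge0 `|zs n - zs k|; rewrite /s; lra.
have sub : has_ubound (range s).
  exists (`|u - p0| ^+ 2) => _ [n _ <-]; rewrite /s.
  have := zs_bnd n Dp0 Sp0; have := normr_ge0 (u - zs n); nra.
have := nondecreasing_cvgn snd sub; set l := sup _ => hl.
apply: cauchy_cvg_seq => e e0.
have e2 : 0 < e ^+ 2 / 2 by rewrite divr_gt0 // exprn_gt0.
have [N HN] := (cvg_epsN _ _).1 hl _ e2.
exists N => n k Nn Nk.
have key : forall n k, (N <= n)%N -> (N <= k)%N -> (n <= k)%N -> `|zs n - zs k| < e.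
  move=> {}n {}k {}Nn {}Nk nk.
  have := zs_cauchy nk; have := HN _ Nn; have := HN _ Nk.
  rewrite /s => h1 h2 h3.
  have h4 : `|zs n - zs k| ^+ 2 < e ^+ 2.
    move: h1 h2; rewrite !ltr_norml => /andP[h1 h1'] /andP[h2 h2']; lra.
  by rewrite -(ltr_pXn2r (n := 2)) // ?nnegrE ?normr_ge0 ?(ltW e0).
have [nk|kn] := leqP n k; first exact: key.
by rewrite distrC; apply: key => //; apply: ltnW.
Qed.

Definition zlim := limn zs.
Lemma hz : zs @ \oo --> zlim.
Proof. exact: zs_cvg. Qed.

Lemma hzN e : 0 < e -> exists N, forall n, (N <= n)%N -> `|zlim - zs n| < e.
Proof. by move=> e0; apply: ((cvg_epsN _ _).1 hz). Qed.

Lemma zD : D zlim.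
Proof. by apply: (closed_cvg D clD _ zlim hz); apply: nearW => n; exact: zsD. Qed.

Lemma le0_norm_eps (v : V) : (forall e, 0 < e -> `|v| <= e) -> v = 0.
Proof.
move=> h; apply/eqP; rewrite -normr_le0; exact: le0_eps.
Qed.

Lemma zfix : S zlim = zlim.
Proof.
apply/eqP; rewrite eq_sym -subr_eq0; apply/eqP/le0_norm_eps => e e0.
have e3 : 0 < e / 3 by rewrite divr_gt0.
have [N1 HN1] := hzN e3.
have [N2 HN2] := an_small (normr_ge0 (u - p0)) e3.
pose n := maxn N1 N2.
have h1 := HN1 n (leq_maxl _ _).
have h2 := HN2 n (leq_maxr _ _).
have h3 := zs_bnd n Dp0 Sp0.
have e1 : zlim - S zlim = (zlim - zs n) + (zs n - S (zs n)) + (S (zs n) - S zlim).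
  by rewrite !addrA !subrK.
rewrite e1 zs_res.
apply: le_trans (ler_normD _ _) _.
have h4 := Sne (zsD n) zD.
have h5 : `|an n *: (u - zs n)| <= e / 3.
  rewrite normrZ ger0_norm ?(ltW (an_gt0 n)) //.
  by apply: le_trans h2; rewrite ler_wpM2l // ltW // an_gt0.
have := ler_normD (zlim - zs n) (an n *: (u - zs n)).
rewrite (distrC (zs n)) in h4; lra.
Qed.

Lemma var_bnd w q : 0 <= <<u - w, w - q>> -> `|u - w| <= `|u - q|.
Proof.
move=> h.
have e : u - q = (u - w) + (w - q) by rewrite addrA subrK.
have := CS Hip (u - w) (u - q).
rewrite {1}e (ipDr Hip) (ipnn Hip) => h2.
have := normr_ge0 (u - w); have := normr_ge0 (u - q); nra.
Qed.

Lemma zvar q : D q -> S q = q -> 0 <= <<u - zlim, zlim - q>>.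
Proof.
move=> Dq Sq; rewrite -oppr_le0; apply: le0_eps => e e0.
pose K := `|zlim - q| + `|u - p0| + 1.
have K0 : 0 < K by rewrite /K; have := normr_ge0 (zlim - q); have := normr_ge0 (u - p0); lra.
have [N HN] := hzN (divr_gt0 e0 K0).
have h1 := HN N (leqnn N).
have h2 := zs_L3 N Dq Sq.
have h3 := zs_bnd N Dp0 Sp0.
have h4 := ip_diff (u - zlim) (zlim - q) (u - zs N) (zs N - q).
have e1 : u - zlim - (u - zs N) = zs N - zlim by rewrite opprB addrC addrA subrK.
have e2 : zlim - q - (zs N - q) = zlim - zs N by rewrite opprB addrA subrK.
rewrite e1 e2 (distrC (zs N)) in h4.
have hX : `|zlim - q| + `|u - zs N| <= K by rewrite /K; lra.
have hd : `|zlim - zs N| * (`|zlim - q| + `|u - zs N|) <= e / K * K.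
  by apply: ler_pM; [exact: normr_ge0 | rewrite addr_ge0 | exact: ltW | exact: hX].
rewrite divfK ?gt_eqF // in hd.
have := ler_norm (<<u - zlim, zlim - q>> - <<u - zs N, zs N - q>>).
rewrite ler_norml in h4; case/andP: h4 => h4 _.
lra.
Qed.


Lemma limsup (y : nat -> V) (My : R) : (forall k, D (y k)) -> (forall k, `|u - y k| <= My) ->
  (forall e, 0 < e -> exists N, forall k, (N <= k)%N -> `|y k - S (y k)| <= e) ->
  forall e, 0 < e -> exists N, forall k, (N <= k)%N -> <<u - zlim, y k - zlim>> <= e.
Proof.
move=> Dy hMy he e e0.
pose B := `|u - p0|.
have B0 : 0 <= B by exact: normr_ge0.
have My0 : 0 <= My by apply: le_trans (hMy 0%N).
pose K := My + 2 * B + 1.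
have K0 : 0 < K by rewrite /K; lra.
have d0 : 0 < e / 2 / K by rewrite !divr_gt0.
have [N1 HN1] := hzN ltr01.
have [N2 HN2] := hzN d0.
pose n := maxn N1 N2; pose w := zs n.
have hw1 := HN1 n (leq_maxl _ _); have hw2 := HN2 n (leq_maxr _ _).
have hwB : `|u - w| <= B := zs_bnd n Dp0 Sp0.
have an0 := an_gt0 n.
pose eta := e / 2 * an n / (My + B + 1).
have eta0 : 0 < eta by rewrite /eta !divr_gt0 //; lra.
have [N3 HN3] := he _ eta0.
exists N3 => k Nk.
have hk := HN3 k Nk.
have s1 : <<u - w, y k - w>> <= e / 2.
  have hm := mono (zsD n) (Dy k).
  rewrite (ipBl Hip) zs_res (ipZl Hip) in hm.
  have eyw : y k - w = - (w - y k) by rewrite opprB.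
  have hwy : `|w - y k| <= B + My.
    have -> : w - y k = (w - u) + (u - y k) by rewrite addrA subrK.
    by apply: le_trans (ler_normD _ _) _; rewrite distrC; apply: lerD.
  have hc := CSabs Hip (y k - S (y k)) (w - y k).
  have hc2 : `|y k - S (y k)| * `|w - y k| <= eta * (B + My).
    by apply: ler_pM => //; exact: normr_ge0.
  have hc3 : eta * (B + My) <= e / 2 * an n.
    have h6 : eta * (B + My) <= eta * (My + B + 1) by rewrite ler_wpM2l ?(ltW eta0) //; lra.
    have h7 : eta * (My + B + 1) = e / 2 * an n by rewrite /eta divfK // gt_eqF //; lra.
    lra.
  rewrite eyw (ipNr Hip).
  rewrite ler_norml in hc; case/andP: hc => hc _.
  have : an n * (- <<u - w, w - y k>>) <= an n * (e / 2) by lra.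
  by rewrite ler_pM2l.
have h4 := ip_diff (u - zlim) (y k - zlim) (u - w) (y k - w).
have e1 : u - zlim - (u - w) = w - zlim by rewrite opprB addrC addrA subrK.
have e2 : y k - zlim - (y k - w) = w - zlim by rewrite opprB addrC addrA subrK.
rewrite e1 e2 in h4.
have hyz : `|y k - zlim| <= My + B + 1.
  have -> : y k - zlim = (y k - u) + (u - w) + (w - zlim) by rewrite !addrA !subrK.
  apply: le_trans (ler_normD _ _) _.
  have h8 := ler_normD (y k - u) (u - w).
  rewrite (distrC (y k) u) in h8.
  rewrite (distrC w); have := hMy k; lra.
have h5 : `|zlim - w| * (`|y k - zlim| + `|u - w|) <= e / 2 / K * K.
  apply: ler_pM; [exact: normr_ge0 | by rewrite addr_ge0 | exact: ltW | rewrite /K; lra].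
rewrite divfK ?gt_eqF // in h5.
rewrite (distrC w) in h4.
rewrite ler_norml in h4; case/andP: h4 => _ h4.
lra.
Qed.

Lemma comb_sub (l : R) (a s z : V) :
  l *: a + (1 - l) *: s - z = l *: (a - z) + (1 - l) *: (s - z).
Proof.
rewrite !scalerBr scalerBl scale1r addrACA -opprD; congr (_ + _).
by rewrite addrC -scalerDl subrK scale1r.
Qed.

Lemma sub_sub2 (X Y p : V) : (X - p) - (Y - p) = X - Y.
Proof. by rewrite opprB addrA subrK. Qed.

Lemma comb_diff (a b : R) (w p q : V) :
  (b *: w + (1 - b) *: q) - (a *: w + (1 - a) *: p) =
  (b - a) *: (w - p) + (1 - b) *: (q - p).
Proof.
rewrite !scalerBr addrACA -opprD -scalerDl.
have -> : b - a + (1 - b) = 1 - a by ring.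
by rewrite [(b - a) *: w]scalerBl opprD addrA [b *: w + _ - _]addrAC.
Qed.

Lemma series_tail (f : nat -> R) N k : (N <= k)%N ->
  \sum_(N <= j < k) f j = series f k - series f N.
Proof. by move=> Nk; rewrite sub_series Nk. Qed.

Variable lam : nat -> R.
Variable x : nat -> V.
Hypothesis Hl01 : forall k, 0 <= lam k <= 1.
Hypothesis Hl0 : lam @ \oo --> (0 : R).
Hypothesis Hls : series lam @ \oo --> +oo.
Hypothesis Hld : cvg (series (fun k => `|lam k.+1 - lam k|) @ \oo).
Hypothesis Dx0 : D (x 0%N).
Hypothesis Hx : forall k, x k.+1 = lam k *: u + (1 - lam k) *: S (x k).

Lemma xD k : D (x k).
Proof.
elim: k => [//|k IH]; rewrite Hx; apply: cD => //; try exact: SD; exact: Hl01.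
Qed.

Definition M0 := `|u - zlim| + `|x 0%N - zlim|.

Lemma xbnd k : `|x k - zlim| <= M0.
Proof.
rewrite /M0; elim: k => [|k IH]; first by have := normr_ge0 (u - zlim); lra.
rewrite Hx comb_sub; apply: le_trans (ler_normD _ _) _.
have [l0 l1] := andP (Hl01 k).
rewrite !normrZ !ger0_norm //; last lra.
have h := Sne (xD k) zD; rewrite zfix in h.
have := normr_ge0 (x 0%N - zlim); have := normr_ge0 (u - zlim).
have := normr_ge0 (S (x k) - zlim).
nra.
Qed.

Lemma M0_ge0 : 0 <= M0.
Proof. by rewrite /M0 addr_ge0. Qed.

Lemma uSbnd k : `|u - S (x k)| <= 2 * M0.
Proof.
have -> : u - S (x k) = (u - zlim) + (zlim - S (x k)) by rewrite addrA subrK.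
apply: le_trans (ler_normD _ _) _.
have h := Sne (xD k) zD; rewrite zfix distrC in h.
have := xbnd k; have := normr_ge0 (x 0%N - zlim); rewrite /M0; lra.
Qed.

Lemma uxbnd k : `|u - x k| <= 2 * M0.
Proof.
have -> : u - x k = (u - zlim) + (zlim - x k) by rewrite addrA subrK.
apply: le_trans (ler_normD _ _) _.
have := xbnd k; rewrite distrC; have := normr_ge0 (x 0%N - zlim); rewrite /M0; lra.
Qed.

Lemma lam_div N M : exists K, forall k, (K <= k)%N -> M <= \sum_(N <= j < k) lam j.
Proof.
have [K HK] := (nearNP _).1 ((cvgryPge _).1 Hls (M + series lam N)).
exists (maxn K N) => k; rewrite geq_max => /andP[Kk Nk].
rewrite series_tail //; have := HK k Kk; lra.
Qed.

Lemma lam_div1 N M : exists K, forall k, (K <= k)%N -> M <= \sum_(N <= j < k) lam j.+1.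
Proof.
have [K HK] := lam_div N.+1 M; exists K => k Kk.
have := HK k.+1 (leqW Kk); rewrite big_add1 //.
Qed.

Lemma d_rec k : `|x k.+2 - x k.+1| <=
  (1 - lam k.+1) * `|x k.+1 - x k| + 0 + `|lam k.+1 - lam k| * (2 * M0).
Proof.
have E : x k.+2 - x k.+1 = (lam k.+1 - lam k) *: (u - S (x k)) +
    (1 - lam k.+1) *: (S (x k.+1) - S (x k)).
  by rewrite -comb_diff -(Hx k) -(Hx k.+1).
rewrite addr0 E.
apply: le_trans (ler_normD _ _) _.
rewrite !normrZ addrC; apply: lerD.
  have [l0 l1] := andP (Hl01 k.+1).
  rewrite ger0_norm; last lra.
  apply: ler_wpM2l; [lra | exact: Sne (xD _) (xD _)].
by rewrite ler_wpM2l // uSbnd.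
Qed.

Lemma tail_small (f : nat -> R) : cvg (series f @ \oo) ->
  forall e, 0 < e -> exists N, forall n k, (N <= n)%N -> `|\sum_(n <= j < k) f j| <= e.
Proof.
move=> hc e e0.
have [N HN] := (cvg_epsN _ _).1 hc _ (divr_gt0 e0 (ltr0Sn _ 1)).
exists N => n k Nn.
have [nk|kn] := leqP n k; last by rewrite big_geq ?normr0 ?(ltW e0) // ltnW.
rewrite series_tail //.
have h1 := HN n Nn; have h2 := HN k (leq_trans Nn nk).
set l := lim (series f @ \oo) in h1 h2 *.
have -> : series f k - series f n = (l - series f n) - (l - series f k).
  by rewrite opprB [RHS]addrC addrA subrK.
apply: le_trans (ler_normB _ _) _; lra.
Qed.


Lemma d_to0 e : 0 < e -> exists N, forall k, (N <= k)%N -> `|x k.+1 - x k| <= e.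
Proof.
apply: (@xu R (fun k => `|x k.+1 - x k|) (fun _ => 0)
  (fun k => `|lam k.+1 - lam k| * (2 * M0)) (fun k => lam k.+1)).
- by move=> k; exact: normr_ge0.
- by move=> k; exact: Hl01.
- by move=> k; rewrite mulr_ge0 // mulr_ge0 // M0_ge0.
- by move=> k; rewrite mulr0; exact: d_rec.
- by move=> e0 e00; exists 0%N => k _; exact: ltW.
- move=> e0 e00.
  have K0 : 0 < 2 * M0 + 1 by have := M0_ge0; lra.
  have [N HN] := tail_small Hld (divr_gt0 e00 K0).
  exists N => n k Nn; rewrite -mulr_suml.
  have h := HN n k Nn.
  have h2 : \sum_(n <= j < k) `|lam j.+1 - lam j| <= e0 / (2 * M0 + 1).
    by apply: le_trans h; exact: ler_norm.
  have h3 : 0 <= \sum_(n <= j < k) `|lam j.+1 - lam j| by apply: sumr_ge0.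
  have h4 := ler_wpM2r (ltW K0) h2; rewrite divfK ?gt_eqF // in h4.
  have := M0_ge0; nra.
- exact: lam_div1.
Qed.

Lemma e_to0 e : 0 < e -> exists N, forall k, (N <= k)%N -> `|x k - S (x k)| <= e.
Proof.
move=> e0.
have e2 : 0 < e / 2 by rewrite divr_gt0.
have [N1 HN1] := d_to0 e2.
have K0 : 0 < 2 * M0 + 1 by have := M0_ge0; lra.
have [N2 HN2] := (cvg_epsN _ _).1 Hl0 _ (divr_gt0 e2 K0).
exists (maxn N1 N2) => k; rewrite geq_max => /andP[k1 k2].
have E1 : x k.+1 - S (x k) = lam k *: (u - S (x k)).
  by rewrite Hx comb_sub subrr scaler0 addr0.
have E : x k - S (x k) = (x k - x k.+1) + lam k *: (u - S (x k)).
  by rewrite -E1 addrA subrK.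
rewrite E; apply: le_trans (ler_normD _ _) _.
rewrite distrC normrZ.
have h1 := HN1 k k1; have h2 := HN2 k k2; rewrite sub0r normrN in h2.
have h3 := uSbnd k.
have h4 : `|lam k| * `|u - S (x k)| <= e / 2 / (2 * M0 + 1) * (2 * M0 + 1).
  apply: ler_pM. all: try (exact: normr_ge0). all: try (exact: ltW). all: try (have := M0_ge0; lra).
rewrite divfK ?gt_eqF // in h4; lra.
Qed.

Lemma halpern_cvg : x @ \oo --> zlim.
Proof.
have hb := limsup xD uxbnd e_to0.
have main : forall e, 0 < e -> exists N, forall k, (N <= k)%N -> `|x k - zlim| ^+ 2 <= e.
  apply: (@xu R (fun k => `|x k - zlim| ^+ 2) (fun k => 2 * <<u - zlim, x k.+1 - zlim>>)
    (fun _ => 0) lam).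
  - by move=> k; exact: sqr_ge0.
  - exact: Hl01.
  - by [].
  - move=> k; rewrite addr0.
    have [l0 l1] := andP (Hl01 k).
    have E : x k.+1 - zlim = lam k *: (u - zlim) + (1 - lam k) *: (S (x k) - zlim).
      by rewrite Hx comb_sub.
    have hB : `|(1 - lam k) *: (S (x k) - zlim)| <= (1 - lam k) * `|x k - zlim|.
      rewrite normrZ ger0_norm; last lra.
      apply: ler_wpM2l; first lra.
      by rewrite -{1}zfix; apply: Sne (xD k) zD.
    have hB2 : `|(1 - lam k) *: (S (x k) - zlim)| ^+ 2 <= (1 - lam k) * `|x k - zlim| ^+ 2.
      have g1 := normr_ge0 ((1 - lam k) *: (S (x k) - zlim)).
      have g2 := normr_ge0 (x k - zlim).
      have g3 := ler_pM g1 g1 hB hB.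
      have g4 : 0 <= lam k * (1 - lam k) * `|x k - zlim| ^+ 2 by rewrite mulr_ge0 ?sqr_ge0 // mulr_ge0 //; lra.
      rewrite !expr2 in g4 *; nra.
    rewrite E (sqrnD Hip) (ipDr Hip) (ipZl Hip) !(ipZr Hip) normrZ ger0_norm // (ipnn Hip).
    have := sqr_ge0 (lam k * `|u - zlim|).
    nra.
  - move=> e e0; have [N HN] := hb _ (divr_gt0 e0 (ltr0Sn _ 1)).
    exists N => k Nk; have := HN k.+1 (leqW Nk); lra.
  - by move=> e e0; exists 0%N => n k _; rewrite big1 // ltW.
  - exact: lam_div.
apply/cvg_epsN => e e0.
have [N HN] := main _ (divr_gt0 (exprn_gt0 2 e0) (ltr0Sn _ 1)).
exists N => k Nk; have h := HN k Nk.
rewrite distrC -(ltr_pXn2r (n := 2)) ?nnegrE ?normr_ge0 ?(ltW e0) //.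
have : 0 < e ^+ 2 by exact: exprn_gt0.
lra.
Qed.

End Path.

Lemma halpern_S (p0 : V) (lam : nat -> R) (x : nat -> V) :
  D p0 -> S p0 = p0 ->
  (forall k, 0 <= lam k <= 1) -> lam @ \oo --> (0 : R) -> series lam @ \oo --> +oo ->
  cvg (series (fun k => `|lam k.+1 - lam k|) @ \oo) ->
  D (x 0%N) -> (forall k, x k.+1 = lam k *: u + (1 - lam k) *: S (x k)) ->
  exists z, [/\ D z, S z = z, (forall q, D q -> S q = q -> 0 <= <<u - z, z - q>>)
    & x @ \oo --> z].
Proof.
move=> Dp0 Sp0 Hl01 Hl0 Hls Hld Dx0 Hx.
have h : forall n, exists z, D z /\ z = tn n *: u + (1 - tn n) *: S z.
  by move=> n; have [z ? ?] := browder_pt (tn01 n); exists z.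
have [zs Hzs] := choice h.
exists (zlim zs); split.
- exact: (zD Dp0 Sp0 Hzs).
- exact: (zfix Dp0 Sp0 Hzs).
- move=> q Dq Sq; exact: (zvar Dp0 Sp0 Hzs Dq Sq).
- exact: (halpern_cvg Dp0 Sp0 Hzs Hl01 Hl0 Hls Hld Dx0 Hx).
Qed.
End Halpern.

Unset Implicit Arguments.
Theorem theorem2 (R : realType) (V : completeNormedModType R)
  (inner : V -> V -> R) (D : set V) (m : nat) (T : 'I_m -> V -> V)
  (Omega : seq (seq 'I_m)) (w : seq 'I_m -> R) (lam : nat -> R)
  (u x0 : V) (x : nat -> V) :
  is_inner_product inner ->
  D !=set0 -> closed D -> convex_subset D ->
  (forall i y, D y -> D (T i y)) ->
  (forall i, firmly_nonexpansive inner D (T i)) ->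
  (\bigcap_(i in [set: 'I_m]) Fix D (T i)) !=set0 ->
  in_M Omega w ->
  steering lam ->
  D u -> D x0 ->
  x 0%N = x0 ->
  (forall k, x k.+1 = lam k *: u
                      + (1 - lam k) *: \sum_(t <- Omega) w t *: string_op T t (x k)) ->
  (exists p, metric_proj (\bigcap_(i in [set: 'I_m]) Fix D (T i)) u p) /\
  (forall p, metric_proj (\bigcap_(i in [set: 'I_m]) Fix D (T i)) u p ->
     x @ \oo --> p).
Proof.
move=> Hip _ clD cD DT FN [p0 Fp0] HM [Hl01 Hl0 Hls Hld] Du Dx0 hx0 Hx.
set F := \bigcap_(i in [set: 'I_m]) Fix D (T i).
pose S := Sop T Omega w.
have FP y : F y <-> D y /\ (forall i, T i y = y).
  split.
    move=> Fy; split; last by move=> i; have [] := Fy i Logic.I.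
    have [_ nn _ _ _] := HM.
    have [t tO] : exists t, t \in Omega.
      by case E: Omega (Omega_nil HM) => [//|t O] _; exists t; rewrite mem_head.
    have := nn t tO; case: t tO => [//|i t] _ _.
    by have [] := Fy i Logic.I.
  by case=> Dy Ty i _; split.
have [Dp0 Tp0] := (FP p0).1 Fp0.
have Sp0 : S p0 = p0 := Sop_fix HM Tp0.
have [z [Dz Sz zv xz]] := @halpern_S R V inner D S u Hip cD clD (Sop_D cD DT HM)
  (Sop_ne Hip DT FN HM) Du p0 lam x Dp0 Sp0 Hl01 Hl0 Hls Hld
  ltac:(by rewrite hx0) Hx.
have Fz : F z.
  by apply/FP; split => //; apply: (Sop_fixF Hip DT FN HM Dz Sz Dp0 Tp0).
have zv' q : F q -> 0 <= inner (u - z) (z - q).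
  move/FP => [Dq Tq]; apply: (zv q Dq); exact: (Sop_fix HM Tq).
split.
  exists z; split => // y Fy.
  move: (var_bnd Hip (zv' y Fy)) => h; exact h.
move=> p [Fp hp].
suff -> : p = z by [].
have h := zv' p Fp.
have h2 := hp z Fz.
have e : u - p = (u - z) + (z - p) by rewrite addrA subrK.
have := sqrnD Hip (u - z) (z - p); rewrite -e => h3.
have h4 : `|z - p| ^+ 2 <= 0.
  have := normr_ge0 (u - p); have := normr_ge0 (u - z); nra.
apply/eqP; rewrite eq_sym -subr_eq0 -normr_eq0 -sqrf_eq0 eq_le h4 sqr_ge0.
done.
Qed.
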